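(* Let $X$ be a finite-dimensional real normed space and let $\{H(a_i^*,\alpha_i)\mid i\in S\}$ be a family of hyperplanes in $X$ indexed by a set $S$, where $a_i^*\in X^*\setminus\{0\}$, $\alpha_i\in\mathbb{R}$. For each (possibly empty) subset $I\subset S$ put $$D_I=\Big(\bigcap_{i\in I}\{x\mid a_i^*(x)\le\alpha_i\}\Big)\cap\Big(\bigcap_{i\in S\setminus I}\{x\mid a_i^*(x)\ge\alpha_i\}\Big).$$ Then for any subsets $I,J\subset S$ one has either $D_I=D_J$ or $\mathrm{ri}\,D_I\cap\mathrm{ri}\,D_J=\varnothing$.
   Context: $H(a^*,\alpha)=\{x\in X\mid a^*(x)=\alpha\}$. $\mathrm{ri}\,M$ denotes the relative interior of a convex set $M$ (its interior relative to its affine hull). *)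

(* Defs.v *)
From HB Require Import structures.
From mathcomp Require Import all_boot all_order all_algebra.
From mathcomp Require Import all_classical all_reals all_analysis.
Set Implicit Arguments. Unset Strict Implicit. Unset Printing Implicit Defensive.
Import Order.TTheory GRing.Theory Num.Theory.
Import numFieldNormedType.Exports.
Local Open Scope classical_set_scope.
Local Open Scope ring_scope.

Definition finite_dim (R : realType) (X : normedModType R) : Prop :=
  exists (n : nat) (f : 'rV[R]_n -> X),
    (forall u v, f (u + v) = f u + f v) /\
    (forall (c : R) u, f (c *: u) = c *: f u) /\
    bijective f.

Definition is_dual_elt (R : realType) (X : normedModType R) (a : X -> R) : Prop :=
  (forall x y, a (x + y) = a x + a y) /\
  (forall (c : R) x, a (c *: x) = c * a x) /\
  continuous a.

Definition aff_hull (R : realType) (X : normedModType R) (M : set X) : set X :=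
  [set x | exists (m : nat) (p : 'I_m -> X) (l : 'I_m -> R),
      (forall k, M (p k)) /\ \sum_(k < m) l k = 1 /\
      x = \sum_(k < m) l k *: p k].

Definition rel_int (R : realType) (X : normedModType R) (M : set X) : set X :=
  [set x | M x /\ exists e : R, 0 < e /\ ball x e `&` aff_hull M `<=` M].

Definition D_cell (R : realType) (X : normedModType R) (S : Type)
  (a : S -> X -> R) (alpha : S -> R) (I : set S) : set X :=
  [set x | (forall i, I i -> a i x <= alpha i) /\
           (forall i, ~ I i -> alpha i <= a i x)].

(* Main.v *)
Require Import Defs.
From HB Require Import structures.
From mathcomp Require Import all_boot all_order all_algebra.
From mathcomp Require Import all_classical all_reals all_analysis.
From mathcomp Require Import lra.
Import Order.TTheory GRing.Theory Num.Theory.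
Import numFieldNormedType.Exports.
Local Open Scope classical_set_scope.
Local Open Scope ring_scope.

Lemma ri_extend (R : realType) (X : normedModType R) (M : set X) (x y : X) :
  rel_int M x -> M y -> exists t : R, 0 < t /\ M ((1 + t) *: x + (- t) *: y).
Proof.
move=> [Mx [e [e0 He]]] My.
set t := e / (`|y - x| + 1).
have n0 : 0 < `|y - x| + 1 by apply: ltr_wpDl.
have t0 : 0 < t by rewrite /t divr_gt0.
exists t; split => //; apply: He; split.
  rewrite -ball_normE /ball_ /=.
  have -> : x - ((1 + t) *: x + (- t) *: y) = t *: (y - x).
    by rewrite scalerDl scale1r scaleNr scalerBr opprD opprD opprK addrA [x + _]addrA subrr add0r addrC.
  rewrite normrZ gtr0_norm // /t.
  by rewrite mulrAC ltr_pdivrMr // ltr_pM2l // ltrDl ltr01.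
exists 2%N, (fun k : 'I_2 => if val k == 0%N then x else y),
  (fun k : 'I_2 => if val k == 0%N then 1 + t else - t).
split; first by move=> k; case: ifP.
rewrite !big_ord_recl big_ord0 /= !addr0; split; [by rewrite -addrA subrr addr0 | by rewrite big_ord0 addr0].
Qed.

Lemma cell_sub (R : realType) (X : normedModType R) (S : Type)
  (a : S -> X -> R) (alpha : S -> R) (I J : set S) (x : X) :
  (forall i, is_dual_elt (a i)) ->
  rel_int (D_cell a alpha I) x -> D_cell a alpha J x ->
  D_cell a alpha I `<=` D_cell a alpha J.
Proof.
move=> lin rx [xJ1 xJ2] y yI.
have [[xI1 xI2] _] := rx.
have [yI1 yI2] := yI.
have [t [t0 [zI1 zI2]]] := ri_extend _ _ _ _ _ rx yI.
have az : forall i, a i ((1 + t) *: x + (- t) *: y) = (1 + t) * a i x - t * a i y.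
  move=> i; have [ad [sc _]] := lin i.
  by rewrite ad !sc mulNr.
split => i Hi.
- case: (pselect (I i)) => HI; first exact: yI1.
  have ex : a i x = alpha i by apply/eqP; rewrite eq_le xJ1 // xI2.
  have := zI2 i HI; rewrite az ex.
  move=> h. rewrite -subr_ge0. nra.
- case: (pselect (I i)) => HI; last exact: yI2.
  have ex : a i x = alpha i by apply/eqP; rewrite eq_le xI1 // xJ2.
  have := zI1 i HI; rewrite az ex.
  move=> h. nra.
Qed.

Theorem lemma3p1 (R : realType) (X : normedModType R) (S : Type)
  (a : S -> X -> R) (alpha : S -> R) :
  finite_dim X ->
  (forall i, is_dual_elt (a i)) ->
  (forall i, a i <> (fun _ => 0)) ->
  forall I J : set S,
    D_cell a alpha I = D_cell a alpha J \/
    rel_int (D_cell a alpha I) `&` rel_int (D_cell a alpha J) = set0.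
Proof.
move=> _ lin _ I J.
case: (pselect (exists x, (rel_int (D_cell a alpha I) `&` rel_int (D_cell a alpha J)) x)).
  move=> [x [xI xJ]]; left; apply/seteqP; split.
    by case: xJ => xJ _; exact: (cell_sub _ _ _ _ _ _ _ _ lin xI xJ).
  by case: xI => xI' _; exact: (cell_sub _ _ _ _ _ _ _ _ lin xJ xI').
move=> nx; right; apply/seteqP; split => // x hx; apply: nx; by exists x.
Qed.
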